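(* Let $|\Omega\rangle=d^{-1/2}\sum_{j=1}^d|j,j\rangle$ and $\mathcal{U}=\mathrm{conv}\{(\mathbb{1}\otimes U)|\Omega\rangle\langle\Omega|(\mathbb{1}\otimes U^\dagger): U\in\mathcal{M}_d\text{ unitary}\}$. For a unital quantum channel $T:\mathcal{M}_d\to\mathcal{M}_d$ (completely positive, trace-preserving, $T(\mathbb{1})=\mathbb{1}$) with Jamiolkowski state $\rho_T=(\mathrm{id}\otimes T)(|\Omega\rangle\langle\Omega|)$, define $$\|T\|_{\mathcal{U}}:=\inf\{\alpha_p+\alpha_n:\ \rho_T=\alpha_p\sigma_p-\alpha_n\sigma_n,\ \alpha_p,\alpha_n\ge0,\ \sigma_p,\sigma_n\in\mathcal{U}\}.$$ Let $T_1,\dots,T_k$ be unital quantum channels on $\mathcal{M}_d$ and $p_1,\dots,p_k\ge0$ with $\sum_ip_i=1$. Then $\|T_1\circ T_2\circ\cdots\circ T_k\|_{\mathcal{U}}\le\prod_i\|T_i\|_{\mathcal{U}}$ and $\|\sum_ip_iT_i\|_{\mathcal{U}}\le\sum_ip_i\|T_i\|_{\mathcal{U}}$. *)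

(* Defs.v *)
From HB Require Import structures.
From mathcomp Require Import all_boot all_order all_algebra.
From mathcomp Require Import all_classical all_reals ereal.
From mathcomp Require Import complex mxtens.

Set Implicit Arguments.
Unset Strict Implicit.
Unset Printing Implicit Defensive.

Import Order.TTheory GRing.Theory Num.Theory.
Local Open Scope ring_scope.

Section QDefs.
Variable R : realType.
Local Notation C := (R[i]).

Definition ctrmx m n (A : 'M[C]_(m, n)) : 'M[C]_(n, m) := (map_mx (fun z : C => z^*) A)^T.

Definition psdmx n (A : 'M[C]_n) : Prop :=
  forall v : 'cV[C]_n, 0 <= (ctrmx v *m A *m v) 0 0.

Definition unitarymx n (U : 'M[C]_n) : Prop := U *m ctrmx U = 1%:M.

(* (i,a)-(j,b) block of X in M_n (x) M_d, tensor index (i,a) |-> i*d + a *)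
Definition mxblock_tens n d (X : 'M[C]_(n * d)) (i j : 'I_n) : 'M[C]_d :=
  \matrix_(a, b) X (mxtens_index (i, a)) (mxtens_index (j, b)).

(* ampliation (id_n (x) T)(X) = sum_{i,j} E_ij (x) T(X_ij) *)
Definition ampl n d (T : 'M[C]_d -> 'M[C]_d) (X : 'M[C]_(n * d)) : 'M[C]_(n * d) :=
  \sum_(i < n) \sum_(j < n) (delta_mx i j *t T (mxblock_tens X i j)).

Definition is_linear_map d (T : 'M[C]_d -> 'M[C]_d) : Prop :=
  forall (a : C) (X Y : 'M[C]_d), T (a *: X + Y) = a *: T X + T Y.

Definition completely_positive d (T : 'M[C]_d -> 'M[C]_d) : Prop :=
  forall (n : nat) (X : 'M[C]_(n * d)), psdmx X -> psdmx (ampl T X).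

Definition trace_preserving d (T : 'M[C]_d -> 'M[C]_d) : Prop :=
  forall X : 'M[C]_d, \tr (T X) = \tr X.

Definition unital_channel d (T : 'M[C]_d -> 'M[C]_d) : Prop :=
  [/\ is_linear_map T, completely_positive T, trace_preserving T & T 1%:M = 1%:M].

Definition omega d : 'cV[C]_(d * d) :=
  (sqrtC (d%:R : C))^-1 *: \sum_(j < d) (delta_mx j (0 : 'I_1) *t delta_mx j (0 : 'I_1)).

Definition omega_proj d : 'M[C]_(d * d) := omega d *m ctrmx (omega d).

Definition choi d (T : 'M[C]_d -> 'M[C]_d) : 'M[C]_(d * d) := ampl T (omega_proj d).

Definition max_ent_unitary d (s : 'M[C]_(d * d)) : Prop :=
  exists U : 'M[C]_d, unitarymx U /\
    s = ((1%:M : 'M[C]_d) *t U) *m omega_proj d *m ((1%:M : 'M[C]_d) *t ctrmx U).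

Definition conv_hull m (S : 'M[C]_m -> Prop) (s : 'M[C]_m) : Prop :=
  exists (N : nat) (w : 'I_N -> R) (x : 'I_N -> 'M[C]_m),
    [/\ forall i, 0 <= w i, \sum_(i < N) w i = 1, forall i, S (x i) &
        s = \sum_(i < N) ((w i)%:C)%C *: x i].

Definition Uset d : 'M[C]_(d * d) -> Prop := conv_hull (@max_ent_unitary d).

(* ||T||_U as an infimum in the extended reals (inf of empty set = +oo) *)
Definition Unorm d (T : 'M[C]_d -> 'M[C]_d) : \bar R :=
  ereal_inf [set x : \bar R | exists (ap an : R) (sp sn : 'M[C]_(d * d)),
     [/\ choi T = (ap%:C)%C *: sp - (an%:C)%C *: sn, 0 <= ap, 0 <= an,
         Uset sp /\ Uset sn & x = (ap + an)%:E]].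

Definition compose_all d k (T : 'I_k -> 'M[C]_d -> 'M[C]_d) : 'M[C]_d -> 'M[C]_d :=
  foldr (fun i f => T i \o f) id (enum 'I_k).

End QDefs.

(* Main.v *)
Require Import Defs.
From HB Require Import structures.
From mathcomp Require Import all_boot all_order all_algebra.
From mathcomp Require Import all_classical all_reals ereal.
From mathcomp Require Import complex mxtens.
From mathcomp Require Import lra ring.
Import Order.TTheory GRing.Theory Num.Theory.
Local Open Scope ring_scope.

Set Implicit Arguments.
Unset Strict Implicit.
Unset Printing Implicit Defensive.

Section Proofs.
Variable R : realType.
Local Notation C := (R[i]).

Lemma sum_delta_l n (k : 'I_n) (F : 'I_n -> C) :
  \sum_(i < n) (k == i)%:R * F i = F k.
Proof.
rewrite (bigD1 k) //= eqxx mul1r big1 ?addr0 // => i /negbTE.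
by rewrite eq_sym => ->; rewrite mul0r.
Qed.

Lemma sum2_delta n (F : 'I_n -> 'I_n -> C) i j :
  \sum_(i' < n) \sum_(j' < n) ((i == i') && (j == j'))%:R * F i' j' = F i j.
Proof.
rewrite (bigD1 i) //= [X in _ + X]big1 => [|i' /negbTE Hi]; last first.
  by apply: big1 => j' _; rewrite eq_sym Hi /= mul0r.
by rewrite eqxx /= sum_delta_l addr0.
Qed.

Lemma tens_sum_entry n d (F : 'I_n -> 'I_n -> 'M[C]_d) k a l b :
  (\sum_(i < n) \sum_(j < n) (delta_mx i j *t F i j))
     (mxtens_index (k, a)) (mxtens_index (l, b)) = F k l a b.
Proof.
rewrite summxE; under eq_bigr do rewrite summxE; under eq_bigr do
  under eq_bigr do rewrite tensmxE mxE.
exact: (sum2_delta (fun i j => F i j a b)).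
Qed.

Lemma blockE n d (X : 'M[C]_(n * d)) :
  \sum_(i < n) \sum_(j < n) (delta_mx i j *t mxblock_tens X i j) = X.
Proof.
apply/matrixP => k l; case: (mxtens_indexP k) => i a; case: (mxtens_indexP l) => j b.
by rewrite tens_sum_entry mxE.
Qed.

Lemma block_ampl n d (T : 'M[C]_d -> 'M[C]_d) (X : 'M[C]_(n * d)) i j :
  mxblock_tens (ampl T X) i j = T (mxblock_tens X i j).
Proof. by apply/matrixP => a b; rewrite mxE /ampl tens_sum_entry. Qed.

Lemma ampl_id n d (X : 'M[C]_(n * d)) : ampl id X = X.
Proof. exact: blockE. Qed.

Lemma ctrmxE m n (A : 'M[C]_(m, n)) i j : ctrmx A i j = (A j i)^*.
Proof. by rewrite !mxE. Qed.

Lemma omegaE d i a :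
  omega R d (mxtens_index (i, a)) 0 = (sqrtC (d%:R : C))^-1 * (i == a)%:R.
Proof.
rewrite /omega mxE summxE; congr (_ * _).
have -> : (0 : 'I_1) = mxtens_index ((0 : 'I_1), (0 : 'I_1)) by apply: val_inj.
have H0 : ((0:'I_1) == mxtens_index ((0:'I_1),(0:'I_1))) = true.
  by apply/eqP; apply: val_inj.
under eq_bigr do rewrite tensmxE !mxE H0 !andbT.
by rewrite sum_delta_l eq_sym.
Qed.

Lemma block_omega d i j :
  mxblock_tens (omega_proj R d) i j = (d%:R : C)^-1 *: delta_mx i j.
Proof.
apply/matrixP => a b.
rewrite [LHS]mxE /omega_proj [LHS]mxE big_ord1 ctrmxE !omegaE [RHS]mxE.
set c := (sqrtC (d%:R : C))^-1.
have c0 : 0 <= c by rewrite invr_ge0 sqrtC_ge0 ler0n.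
rewrite rmorphM /= geC0_conj // rmorph_nat.
have -> : (d%:R : C)^-1 = c * c by rewrite -invfM -expr2 sqrtCK.
rewrite mxE [(a == i)]eq_sym [(b == j)]eq_sym -mulnb natrM.
by rewrite mulrACA.
Qed.


Section Lin.
Variable d : nat.
Variable T : 'M[C]_d -> 'M[C]_d.
Hypothesis hT : is_linear_map T.

Lemma linT0 : T 0 = 0.
Proof. by have := hT (-1) 0 0; rewrite scaler0 addr0 scaleN1r addNr. Qed.
Lemma linTD X Y : T (X + Y) = T X + T Y.
Proof. by have := hT 1 X Y; rewrite !scale1r. Qed.
Lemma linTZ a X : T (a *: X) = a *: T X.
Proof. by have := hT a X 0; rewrite !addr0 linT0 addr0. Qed.
Lemma linT_sum (I : finType) (F : I -> 'M[C]_d) :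
  T (\sum_i F i) = \sum_i T (F i).
Proof. exact: (big_morph T linTD linT0). Qed.
End Lin.

Lemma lin_comp d (T1 T2 : 'M[C]_d -> 'M[C]_d) :
  is_linear_map T1 -> is_linear_map T2 -> is_linear_map (T1 \o T2).
Proof. by move=> h1 h2 a X Y /=; rewrite h2 h1. Qed.

Lemma recon d (T : 'M[C]_d -> 'M[C]_d) : (0 < d)%N -> is_linear_map T ->
  forall X, T X = \sum_(i < d) \sum_(j < d)
     ((d%:R : C) * X i j) *: mxblock_tens (choi T) i j.
Proof.
move=> hd hT X.
have dn0 : (d%:R : C) != 0 by rewrite pnatr_eq0 -lt0n.
under eq_bigr do under eq_bigr do
  rewrite /choi block_ampl block_omega -(linTZ hT) scalerA mulrAC mulfV // mul1r.
under eq_bigr do rewrite -(linT_sum hT).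
by rewrite -(linT_sum hT) -matrix_sum_delta.
Qed.

Lemma tensmxDr m n p q (A : 'M[C]_(m, n)) (B B' : 'M[C]_(p, q)) :
  A *t (B + B') = A *t B + A *t B'.
Proof. by apply/matrixP => i j; rewrite !mxE mulrDr. Qed.
Lemma tensmxZr m n p q (A : 'M[C]_(m, n)) c (B : 'M[C]_(p, q)) :
  A *t (c *: B) = c *: (A *t B).
Proof. by apply/matrixP => i j; rewrite !mxE mulrCA. Qed.
Lemma tensmxNr m n p q (A : 'M[C]_(m, n)) (B : 'M[C]_(p, q)) :
  A *t (- B) = - (A *t B).
Proof. by apply/matrixP => i j; rewrite !mxE mulrN. Qed.
Lemma tensmx_sumr m n p q (A : 'M[C]_(m, n)) (I : finType) (B : I -> 'M[C]_(p, q)) :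
  A *t (\sum_i B i) = \sum_i A *t B i.
Proof. exact: (big_morph _ (tensmxDr A) (tensmx0 A)). Qed.

Section AmplLin.
Variables n d : nat.
Implicit Types F G : 'M[C]_d -> 'M[C]_d.

Lemma ampl_sum (I : finType) (F : I -> 'M[C]_d -> 'M[C]_d) (Y : 'M[C]_(n * d)) :
  ampl (fun X => \sum_i F i X) Y = \sum_i ampl (F i) Y.
Proof.
rewrite /ampl; under eq_bigr do under eq_bigr do rewrite tensmx_sumr.
under eq_bigr do rewrite exchange_big /=.
by rewrite exchange_big.
Qed.

Lemma ampl_scale c F (Y : 'M[C]_(n * d)) :
  ampl (fun X => c *: F X) Y = c *: ampl F Y.
Proof.
rewrite /ampl scaler_sumr; apply: eq_bigr => i _; rewrite scaler_sumr.
by apply: eq_bigr => j _; rewrite tensmxZr.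
Qed.

Lemma ampl_sub F G (Y : 'M[C]_(n * d)) :
  ampl (fun X => F X - G X) Y = ampl F Y - ampl G Y.
Proof.
rewrite /ampl -sumrB; apply: eq_bigr => i _; rewrite -sumrB.
by apply: eq_bigr => j _; rewrite tensmxDr tensmxNr.
Qed.

Lemma ampl_conj (A B : 'M[C]_d) (Y : 'M[C]_(n * d)) :
  ampl (fun X => A *m X *m B) Y = (1%:M *t A) *m Y *m (1%:M *t B).
Proof.
rewrite -[in RHS](blockE Y) mulmx_sumr mulmx_suml; apply: eq_bigr => i _.
rewrite mulmx_sumr mulmx_suml; apply: eq_bigr => j _.
by rewrite !tensmx_mul mul1mx mulmx1.
Qed.

Lemma trace_tens_sum (F : 'I_n -> 'I_n -> 'M[C]_d) :
  \tr (\sum_(i < n) \sum_(j < n) (delta_mx i j *t F i j)) = \sum_(i < n) \tr (F i i).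
Proof.
rewrite /mxtrace (reindex (@mxtens_index n d)); last first.
  by apply: onW_bij; exists (@mxtens_unindex n d); [apply: mxtens_indexK | apply: mxtens_unindexK].
rewrite (eq_bigr (fun p => F p.1 p.1 p.2 p.2)); last first.
  by move=> [i a] _; rewrite tens_sum_entry.
by rewrite -(pair_big xpredT xpredT (fun i a => F i i a a)).
Qed.

Lemma trace_ampl F (Y : 'M[C]_(n * d)) :
  \tr (ampl F Y) = \sum_(i < n) \tr (F (mxblock_tens Y i i)).
Proof. exact: trace_tens_sum. Qed.
End AmplLin.

Lemma trace_delta n (i : 'I_n) : \tr (delta_mx i i : 'M[C]_n) = 1.
Proof.
rewrite /mxtrace; under eq_bigr do rewrite mxE andbb eq_sym -[_%:R]mulr1.
by rewrite sum_delta_l.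
Qed.

Lemma trace_choi d (T : 'M[C]_d -> 'M[C]_d) : (0 < d)%N -> trace_preserving T ->
  \tr (choi T) = 1.
Proof.
move=> hd hT; rewrite /choi trace_ampl.
under eq_bigr do rewrite hT block_omega mxtraceZ trace_delta mulr1.
by rewrite sumr_const card_ord -[_ *+ d]mulr_natr mulVf // pnatr_eq0 -lt0n.
Qed.


Definition Ad d (U X : 'M[C]_d) := U *m X *m ctrmx U.
Definition Gm d (U : 'M[C]_d) : 'M[C]_(d * d) :=
  (1%:M *t U) *m omega_proj R d *m (1%:M *t ctrmx U).

Lemma choi_Ad d (U : 'M[C]_d) : choi (Ad U) = Gm U.
Proof. exact: ampl_conj. Qed.

Lemma ctrmx_mul m n p (A : 'M[C]_(m, n)) (B : 'M[C]_(n, p)) :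
  ctrmx (A *m B) = ctrmx B *m ctrmx A.
Proof.
apply/matrixP => i j; rewrite !mxE rmorph_sum; apply: eq_bigr => k _.
by rewrite !mxE rmorphM mulrC.
Qed.

Lemma ctrmx1 n : ctrmx (1%:M : 'M[C]_n) = 1%:M.
Proof. by apply/matrixP => i j; rewrite !mxE eq_sym rmorph_nat. Qed.

Lemma unitary1 n : Defs.unitarymx (1%:M : 'M[C]_n).
Proof. by rewrite /Defs.unitarymx ctrmx1 mulmx1. Qed.

Lemma unitary_mul d (U V : 'M[C]_d) :
  Defs.unitarymx U -> Defs.unitarymx V -> Defs.unitarymx (U *m V).
Proof.
rewrite /Defs.unitarymx ctrmx_mul => hU hV.
by rewrite mulmxA -(mulmxA U) hV mulmx1 hU.
Qed.

Lemma Ad_mul d (U V X : 'M[C]_d) : Ad U (Ad V X) = Ad (U *m V) X.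
Proof. by rewrite /Ad ctrmx_mul !mulmxA. Qed.

Lemma Ad_lin d (U : 'M[C]_d) : is_linear_map (Ad U).
Proof. by move=> a X Y; rewrite /Ad mulmxDr mulmxDl -scalemxAr -scalemxAl. Qed.

Lemma Ad_TP d (U : 'M[C]_d) : Defs.unitarymx U -> trace_preserving (Ad U).
Proof.
move=> hU X; rewrite /Ad mxtrace_mulC mulmxA (mulmx1C hU) mul1mx //.
Qed.

Lemma Ad1 d (X : 'M[C]_d) : Ad 1%:M X = X.
Proof. by rewrite /Ad ctrmx1 mul1mx mulmx1. Qed.

Lemma trace_Gm d (U : 'M[C]_d) : (0 < d)%N -> Defs.unitarymx U -> \tr (Gm U) = 1.
Proof. by move=> hd hU; rewrite -choi_Ad trace_choi //; apply: Ad_TP. Qed.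

Definition Rep d (M : 'M[C]_(d * d)) (x : R) : Prop :=
  exists (I J : finType) (wp : I -> R) (Up : I -> 'M[C]_d)
         (wn : J -> R) (Un : J -> 'M[C]_d),
   [/\ (forall i, 0 <= wp i) /\ (forall j, 0 <= wn j),
       (forall i, Defs.unitarymx (Up i)) /\ (forall j, Defs.unitarymx (Un j)),
       M = \sum_i ((wp i)%:C)%C *: Gm (Up i) - \sum_j ((wn j)%:C)%C *: Gm (Un j) &
       x = \sum_i wp i + \sum_j wn j].

Definition sfun (I J : finType) T (f : I -> T) (g : J -> T) (s : (I + J)%type) : T :=
  match s with inl i => f i | inr j => g j end.

Lemma Rep0 d : Rep (0 : 'M[C]_(d * d)) 0.
Proof.
exists 'I_0, 'I_0, (fun _ => 0), (fun _ => 1%:M), (fun _ => 0), (fun _ => 1%:M).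
by rewrite !big_ord0 subr0 addr0; split => //; split => // ?; apply: unitary1.
Qed.

Lemma Rep_add d (M N : 'M[C]_(d * d)) x y : Rep M x -> Rep N y -> Rep (M + N) (x + y).
Proof.
move=> [I1 [J1 [wp1 [Up1 [wn1 [Un1 [[p1 n1] [u1 v1] -> ->]]]]]]].
move=> [I2 [J2 [wp2 [Up2 [wn2 [Un2 [[p2 n2] [u2 v2] -> ->]]]]]]].
exists (I1 + I2)%type, (J1 + J2)%type, (sfun wp1 wp2), (sfun Up1 Up2),
  (sfun wn1 wn2), (sfun Un1 Un2).
split.
- by split => -[].
- by split => -[].
- by rewrite !big_sumType /= opprD addrACA.
- by rewrite !big_sumType /= addrACA.
Qed.

Lemma Rep_opp d (M : 'M[C]_(d * d)) x : Rep M x -> Rep (- M) x.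
Proof.
move=> [I1 [J1 [wp1 [Up1 [wn1 [Un1 [[p1 n1] [u1 v1] -> ->]]]]]]].
exists J1, I1, wn1, Un1, wp1, Up1; split => //.
  by rewrite opprB.
by rewrite addrC.
Qed.

Lemma Rep_scale d (M : 'M[C]_(d * d)) x a : 0 <= a -> Rep M x -> Rep ((a%:C)%C *: M) (a * x).
Proof.
move=> a0 [I1 [J1 [wp1 [Up1 [wn1 [Un1 [[p1 n1] [u1 v1] -> ->]]]]]]].
exists I1, J1, (fun i => a * wp1 i), Up1, (fun j => a * wn1 j), Un1; split => //.
- by split => i; apply: mulr_ge0.
- rewrite scalerBr !scaler_sumr; congr (_ - _); apply: eq_bigr => i _;
  by rewrite scalerA rmorphM.
- by rewrite mulrDr !mulr_sumr.
Qed.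

Lemma Uset_Rep d (s : 'M[C]_(d * d)) : Uset s -> Rep s 1.
Proof.
move=> [N [w [x [w0 w1 hx ->]]]].
have [U hU] := fin_all_exists hx.
exists 'I_N, 'I_0, w, U, (fun _ => 0), (fun _ => 1%:M); split.
- by split.
- by split => i; [case: (hU i) | apply: unitary1].
- by rewrite big_ord0 subr0; apply: eq_bigr => i _; case: (hU i) => _ ->.
- by rewrite big_ord0 addr0.
Qed.


Lemma sum_enum_val (V : zmodType) (I : finType) (F : I -> V) :
  \sum_i F i = \sum_(k < #|I|) F (enum_val k).
Proof. by rewrite (reindex (@enum_val I xpredT)) //; apply: onW_bij; exact: enum_val_bij. Qed.

Lemma Gm_Uset d (U : 'M[C]_d) : Defs.unitarymx U -> Uset (Gm U).
Proof.
move=> hU; exists 1%N, (fun _ => 1), (fun _ => Gm U); split => //.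
- by rewrite big_ord1.
- by move=> _; exists U; split.
- by rewrite big_ord1 rmorph1 scale1r.
Qed.

Lemma cone d (I : finType) (w : I -> R) (U : I -> 'M[C]_d) :
  (forall i, 0 <= w i) -> (forall i, Defs.unitarymx (U i)) ->
  exists s, Uset s /\
    \sum_i ((w i)%:C)%C *: Gm (U i) = ((\sum_i w i)%:C)%C *: s.
Proof.
move=> w0 hU.
have [s0|sn0] := eqVneq (\sum_i w i) 0.
  exists (Gm 1%:M); split; first by apply: Gm_Uset; apply: unitary1.
  rewrite s0 rmorph0 scale0r big1 // => i _.
  by rewrite (psumr_eq0P (fun i _ => w0 i) s0) // rmorph0 scale0r.
set s := \sum_i w i.
exists (\sum_i ((w i / s)%:C)%C *: Gm (U i)); split.
  exists #|I|, (fun k => w (enum_val k) / s), (fun k => Gm (U (enum_val k))).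
  split.
  - by move=> k; rewrite divr_ge0 // sumr_ge0.
  - by rewrite -(sum_enum_val (fun i => w i / s)) -mulr_suml mulfV.
  - by move=> k; exists (U (enum_val k)); split.
  - exact: (sum_enum_val (fun i => ((w i / s)%:C)%C *: Gm (U i))).
rewrite scaler_sumr; apply: eq_bigr => i _.
by rewrite scalerA -rmorphM mulrC divfK.
Qed.

Lemma Rep_Unorm d (T : 'M[C]_d -> 'M[C]_d) x : Rep (choi T) x -> (Unorm T <= x%:E)%E.
Proof.
move=> [I [J [wp [Up [wn [Un [[p n] [u v] hM ->]]]]]]].
have [sp [hsp ep]] := cone p u; have [sn [hsn en]] := cone n v.
apply: ereal_inf_lbound; exists (\sum_i wp i), (\sum_j wn j), sp, sn; split => //.
- by rewrite hM ep en.
- exact: sumr_ge0.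
- exact: sumr_ge0.
Qed.

Lemma tr_opp n (A : 'M[C]_n) : \tr (- A) = - \tr A.
Proof. by rewrite /mxtrace -sumrN; apply: eq_bigr => i _; rewrite mxE. Qed.

Lemma tr_sumG d (I : finType) (c : I -> C) (U : I -> 'M[C]_d) :
  (0 < d)%N -> (forall i, Defs.unitarymx (U i)) ->
  \tr (\sum_i c i *: Gm (U i)) = \sum_i c i.
Proof.
move=> hd hU; rewrite raddf_sum; apply: eq_bigr => i _.
by change (\tr (c i *: Gm (U i)) = c i); rewrite mxtraceZ trace_Gm // mulr1.
Qed.

Lemma Rep_ge1 d (T : 'M[C]_d -> 'M[C]_d) x : (0 < d)%N -> trace_preserving T ->
  Rep (choi T) x -> 1 <= x.
Proof.
move=> hd hT [I [J [wp [Up [wn [Un [[p n] [u v] hM ->]]]]]]].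
have := trace_choi hd hT; rewrite hM mxtraceD tr_opp !tr_sumG //.
rewrite -!rmorph_sum -rmorphB -(rmorph1 (real_complex R)).
move/(congr1 (@complex.Re R)) => /= h.
have : 0 <= \sum_j wn j by apply: sumr_ge0.
lra.
Qed.

Lemma Rep_of_set d (T : 'M[C]_d -> 'M[C]_d) ap an sp sn :
  choi T = (ap%:C)%C *: sp - (an%:C)%C *: sn -> 0 <= ap -> 0 <= an ->
  Uset sp -> Uset sn -> Rep (choi T) (ap + an).
Proof.
move=> hc ap0 an0 h1 h2; rewrite hc.
have := Rep_add (Rep_scale ap0 (Uset_Rep h1)) (Rep_opp (Rep_scale an0 (Uset_Rep h2))).
by rewrite !mulr1.
Qed.

Lemma Unorm_ge1 d (T : 'M[C]_d -> 'M[C]_d) : (0 < d)%N -> trace_preserving T ->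
  (1 <= Unorm T)%E.
Proof.
move=> hd hT; apply: le_ereal_inf_tmp => y [ap [an [sp [sn [hc ap0 an0 [h1 h2] ->]]]]].
by rewrite lee_fin; apply: (Rep_ge1 hd hT); apply: Rep_of_set hc ap0 an0 h1 h2.
Qed.


Lemma linTN d (T : 'M[C]_d -> 'M[C]_d) : is_linear_map T -> forall X, T (- X) = - T X.
Proof. by move=> hT X; rewrite -scaleN1r (linTZ hT) scaleN1r. Qed.

Lemma linT_comb d (T : 'M[C]_d -> 'M[C]_d) (I J : finType) (c : I -> C) (Y : I -> 'M[C]_d)
  (e : J -> C) (Z : J -> 'M[C]_d) : is_linear_map T ->
  T (\sum_i c i *: Y i - \sum_j e j *: Z j) = \sum_i c i *: T (Y i) - \sum_j e j *: T (Z j).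
Proof.
move=> hT; rewrite (linTD hT) (linTN hT) !(linT_sum hT).
by congr (_ - _); apply: eq_bigr => i _; rewrite (linTZ hT).
Qed.

Lemma block_add n d (A B : 'M[C]_(n * d)) i j :
  mxblock_tens (A + B) i j = mxblock_tens A i j + mxblock_tens B i j.
Proof. by apply/matrixP => a b; rewrite !mxE. Qed.
Lemma block_scale n d c (A : 'M[C]_(n * d)) i j :
  mxblock_tens (c *: A) i j = c *: mxblock_tens A i j.
Proof. by apply/matrixP => a b; rewrite !mxE. Qed.

Definition rec d (M : 'M[C]_(d * d)) (X : 'M[C]_d) : 'M[C]_d :=
  \sum_(i < d) \sum_(j < d) ((d%:R : C) * X i j) *: mxblock_tens M i j.

Lemma rec_add d (A B : 'M[C]_(d * d)) X : rec (A + B) X = rec A X + rec B X.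
Proof.
rewrite /rec -big_split; apply: eq_bigr => i _; rewrite -big_split.
by apply: eq_bigr => j _; rewrite block_add scalerDr.
Qed.
Lemma rec_scale d c (A : 'M[C]_(d * d)) X : rec (c *: A) X = c *: rec A X.
Proof.
rewrite /rec scaler_sumr; apply: eq_bigr => i _; rewrite scaler_sumr.
by apply: eq_bigr => j _; rewrite block_scale !scalerA mulrC.
Qed.
Lemma rec0 d X : rec (0 : 'M[C]_(d * d)) X = 0.
Proof. by have := rec_scale 0 0 X; rewrite !scale0r. Qed.
Lemma rec_comb d (I J : finType) (c : I -> C) (Y : I -> 'M[C]_(d * d))
  (e : J -> C) (Z : J -> 'M[C]_(d * d)) X :
  rec (\sum_i c i *: Y i - \sum_j e j *: Z j) X =
  \sum_i c i *: rec (Y i) X - \sum_j e j *: rec (Z j) X.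
Proof.
have rs (K : finType) (F : K -> 'M[C]_(d * d)) : rec (\sum_k F k) X = \sum_k rec (F k) X.
  exact: (big_morph (fun M => rec M X) (fun A B => rec_add A B X) (rec0 X)).
rewrite rec_add -scaleN1r rec_scale scaleN1r !rs.
by congr (_ - _); apply: eq_bigr => i _; rewrite rec_scale.
Qed.

Lemma RepT d (T : 'M[C]_d -> 'M[C]_d) (I J : finType) (wp : I -> R) (Up : I -> 'M[C]_d)
  (wn : J -> R) (Un : J -> 'M[C]_d) : (0 < d)%N -> is_linear_map T ->
  choi T = \sum_i ((wp i)%:C)%C *: Gm (Up i) - \sum_j ((wn j)%:C)%C *: Gm (Un j) ->
  forall X, T X = \sum_i ((wp i)%:C)%C *: Ad (Up i) X - \sum_j ((wn j)%:C)%C *: Ad (Un j) X.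
Proof.
move=> hd hT hM X; rewrite (recon hd hT X) -/(rec (choi T) X) hM rec_comb.
have AdR U : rec (Gm U) X = Ad U X.
  by rewrite -choi_Ad /rec -(recon hd (Ad_lin U)).
by congr (_ - _); apply: eq_bigr => i _; rewrite AdR.
Qed.

Lemma comb_comp d (I K L : finType) (a : I -> C) (V : I -> 'M[C]_d) (c : K -> C)
  (U : K -> 'M[C]_d) (e : L -> C) (U' : L -> 'M[C]_d) X :
  \sum_i a i *: Ad (V i) (\sum_k c k *: Ad (U k) X - \sum_l e l *: Ad (U' l) X) =
  \sum_(p : I * K) (a p.1 * c p.2) *: Ad (V p.1 *m U p.2) X -
  \sum_(p : I * L) (a p.1 * e p.2) *: Ad (V p.1 *m U' p.2) X.
Proof.
rewrite -(pair_big xpredT xpredT (fun i k => (a i * c k) *: Ad (V i *m U k) X)).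
rewrite -(pair_big xpredT xpredT (fun i k => (a i * e k) *: Ad (V i *m U' k) X)).
rewrite -sumrB; apply: eq_bigr => i _.
rewrite (linT_comb _ _ _ _ (Ad_lin (V i))) scalerBr !scaler_sumr.
by congr (_ - _); apply: eq_bigr => k _; rewrite scalerA Ad_mul.
Qed.

Lemma choi_comb d (I J : finType) (c : I -> C) (U : I -> 'M[C]_d) (e : J -> C)
  (U' : J -> 'M[C]_d) :
  choi (fun X => \sum_i c i *: Ad (U i) X - \sum_j e j *: Ad (U' j) X) =
  \sum_i c i *: Gm (U i) - \sum_j e j *: Gm (U' j).
Proof.
rewrite /choi ampl_sub !ampl_sum; congr (_ - _); apply: eq_bigr => i _;
by rewrite ampl_scale /Ad ampl_conj.
Qed.

Lemma abel4 (V : zmodType) (p1 p2 p3 p4 : V) :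
  (p1 - p2) - (p3 - p4) = (p1 + p4) - (p2 + p3).
Proof. by rewrite opprB opprD addrACA. Qed.


Lemma Rep_comp d (T1 T2 : 'M[C]_d -> 'M[C]_d) x1 x2 : (0 < d)%N ->
  is_linear_map T1 -> is_linear_map T2 ->
  Rep (choi T1) x1 -> Rep (choi T2) x2 -> Rep (choi (T1 \o T2)) (x1 * x2).
Proof.
move=> hd l1 l2.
move=> [I1 [J1 [a [V [b [V' [[pa pb] [uV uV'] h1 ->]]]]]]].
move=> [I2 [J2 [c [U [e [U' [[pc pe] [uU uU'] h2 ->]]]]]]].
have E1 := RepT hd l1 h1; have E2 := RepT hd l2 h2.
exists ((I1 * I2) + (J1 * J2))%type, ((I1 * J2) + (J1 * I2))%type,
  (sfun (fun p => a p.1 * c p.2) (fun p => b p.1 * e p.2)),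
  (sfun (fun p => V p.1 *m U p.2) (fun p => V' p.1 *m U' p.2)),
  (sfun (fun p => a p.1 * e p.2) (fun p => b p.1 * c p.2)),
  (sfun (fun p => V p.1 *m U' p.2) (fun p => V' p.1 *m U p.2)).
split.
- by split => -[[i j]|[i j]] /=; apply: mulr_ge0.
- by split => -[[i j]|[i j]] /=; apply: unitary_mul.
- rewrite -choi_comb; congr choi; apply: funext => X /=.
  rewrite E1 E2 !comb_comp !big_sumType /= abel4.
  by congr ((_ + _) - (_ + _)); apply: eq_bigr => p _; rewrite rmorphM.
- rewrite !big_sumType /=.
  rewrite mulrDl !mulrDr !big_distrlr !pair_bigA /=.
  ring.
Qed.


Lemma approx d (T : 'M[C]_d -> 'M[C]_d) u e : Unorm T = u%:E -> 0 < e ->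
  exists x, Rep (choi T) x /\ x < u + e.
Proof.
move=> hU e0.
have hfin : Unorm T \is a fin_num by rewrite hU.
have [y [ap [an [sp [sn [hc ap0 an0 [h1 h2] ->]]]]]] := lb_ereal_inf_adherent e0 hfin.
rewrite -/(Unorm T) hU -EFinD lte_fin => hy.
by exists (ap + an); split => //; apply: Rep_of_set hc ap0 an0 h1 h2.
Qed.

Lemma Unorm_comp d (T1 T2 : 'M[C]_d -> 'M[C]_d) : (0 < d)%N ->
  is_linear_map T1 -> trace_preserving T1 ->
  is_linear_map T2 -> trace_preserving T2 ->
  (Unorm (T1 \o T2) <= Unorm T1 * Unorm T2)%E.
Proof.
move=> hd l1 t1 l2 t2.
have g1 := Unorm_ge1 hd t1; have g2 := Unorm_ge1 hd t2.
have p1 : (0 < Unorm T1)%E by apply: lt_le_trans g1; exact: lte01.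
have p2 : (0 < Unorm T2)%E by apply: lt_le_trans g2; exact: lte01.
case E1: (Unorm T1) p1 g1 => [u1| |] // p1 g1; last first.
  by rewrite gt0_mulye // leey.
case E2: (Unorm T2) p2 g2 => [u2| |] // p2 g2; last first.
  by rewrite gt0_muley // leey.
rewrite lee_fin in g1; rewrite lee_fin in g2.
rewrite -EFinM; apply/lee_addgt0Pr => e e0.
set eps := e / (u1 + u2 + e + 1).
have D0 : 0 < u1 + u2 + e + 1 by lra.
have eps0 : 0 < eps by apply: divr_gt0.
have epsE : eps * (u1 + u2 + e + 1) = e by rewrite /eps divfK // gt_eqF.
have [x1 [r1 h1]] := approx E1 eps0.
have [x2 [r2 h2]] := approx E2 eps0.
have x1g := Rep_ge1 hd t1 r1; have x2g := Rep_ge1 hd t2 r2.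
apply: le_trans (Rep_Unorm (Rep_comp hd l1 l2 r1 r2)) _.
rewrite -EFinD lee_fin.
have eps_le : eps <= e by nra.
have A1 : x1 * x2 <= (u1 + eps) * x2 by nra.
have A2 : (u1 + eps) * x2 <= (u1 + eps) * (u2 + eps) by nra.
nra.
Qed.

Lemma Rep_id d : (0 < d)%N -> Rep (choi (@id 'M[C]_d)) 1.
Proof.
move=> hd; have -> : (@id 'M[C]_d) = Ad 1%:M by apply: funext => X; rewrite Ad1.
by rewrite choi_Ad; apply: Uset_Rep; apply: Gm_Uset; apply: unitary1.
Qed.

Lemma fold_comp d k (T : 'I_k -> 'M[C]_d -> 'M[C]_d) (s : seq 'I_k) :
  (0 < d)%N -> (forall i, unital_channel (T i)) ->
  [/\ is_linear_map (foldr (fun i f => T i \o f) id s),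
      trace_preserving (foldr (fun i f => T i \o f) id s) &
      (Unorm (foldr (fun i f => T i \o f) id s) <= \prod_(i <- s) Unorm (T i))%E].
Proof.
move=> hd hT; elim: s => [|i s [l t IH]] /=.
  split => //; rewrite big_nil.
  by apply: Rep_Unorm; apply: Rep_id.
case: (hT i) => li _ ti _.
split; first exact: lin_comp.
  by move=> X /=; rewrite ti t.
rewrite big_cons; apply: le_trans (Unorm_comp hd li ti l t) _.
apply: lee_pmul => //.
- exact: le_trans (ltW lte01) (Unorm_ge1 hd ti).
- exact: le_trans (ltW lte01) (Unorm_ge1 hd t).
Qed.

Lemma choi_lin_comb d k (p : 'I_k -> C) (T : 'I_k -> 'M[C]_d -> 'M[C]_d) :
  choi (fun X => \sum_(i < k) p i *: T i X) = \sum_(i < k) p i *: choi (T i).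
Proof. by rewrite /choi ampl_sum; apply: eq_bigr => i _; rewrite ampl_scale. Qed.

End Proofs.

Theorem proposition3 (R : realType) (d k : nat) (hd : (0 < d)%N)
    (T : 'I_k -> 'M[R[i]]_d -> 'M[R[i]]_d) (p : 'I_k -> R)
    (hT : forall i, unital_channel (T i))
    (hp0 : forall i, 0 <= p i) (hp1 : \sum_(i < k) p i = 1) :
  (Unorm (compose_all T) <= \prod_(i < k) Unorm (T i))%E /\
  (Unorm (fun X => (\sum_(i < k) ((p i)%:C)%C *: T i X)%R)
     <= \sum_(i < k) (p i)%:E * Unorm (T i))%E.
Proof.
split.
  have [_ _ H] := fold_comp (enum 'I_k) hd hT.
  rewrite /compose_all; apply: le_trans H _.
  by rewrite big_enum /=.
have ge0 i : (0 <= Unorm (T i))%E.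
  by case: (hT i) => _ _ ti _; exact: le_trans (ltW lte01) (Unorm_ge1 hd ti).
case: (pselect (exists i, 0 < p i /\ Unorm (T i) = +oo%E)) => [[i [pi ei]]|Hn].
  have nNy (x : \bar R) : (0 <= x)%E -> x != -oo%E by case: x.
  rewrite (bigD1 i) //= ei gt0_muley ?lte_fin // addye ?leey //.
  apply: nNy; apply: sume_ge0 => j _; apply: mule_ge0 => //.
  by rewrite lee_fin.
have fin i : 0 < p i -> Unorm (T i) = (fine (Unorm (T i)))%:E.
  move=> pi; rewrite fineK //.
  have := ge0 i; case E: (Unorm (T i)) => [u| |] //.
  by move=> _; exfalso; apply: Hn; exists i.
set v := fun i => fine (Unorm (T i)).
rewrite (eq_bigr (fun i => (p i * v i)%:E)); last first.
  move=> i _; have [p0|pi] := eqVneq (p i) 0.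
    by rewrite p0 mul0e mul0r.
  have pi' : 0 < p i by rewrite lt_neqAle eq_sym pi hp0.
  by rewrite (fin i pi') -EFinM.
rewrite sumEFin; apply/lee_addgt0Pr => e e0.
pose K (M : 'M[R[i]]_(d * d)) (y : R) := exists x, Rep M x /\ x <= y.
have K0 : K 0 0 by exists 0; split; [apply: Rep0 | ].
have KD : forall M1 y1 M2 y2, K M1 y1 -> K M2 y2 -> K (M1 + M2) (y1 + y2).
  move=> M1 y1 M2 y2 [x1 [r1 h1]] [x2 [r2 h2]].
  by exists (x1 + x2); split; [apply: Rep_add | apply: lerD].
have Ki : forall i, true -> K (((p i)%:C)%C *: choi (T i)) (p i * (v i + e)).
  move=> i _; have [p0|pi] := eqVneq (p i) 0.
    by rewrite p0 mul0r rmorph0 scale0r.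
  have pi' : 0 < p i by rewrite lt_neqAle eq_sym pi hp0.
  have [x [r h]] := approx (fin i pi') e0.
  exists (p i * x); split; first exact: Rep_scale.
  by rewrite ler_wpM2l // ltW.
have : K (\sum_(i < k) ((p i)%:C)%C *: choi (T i)) (\sum_(i < k) p i * (v i + e)).
  by apply: big_ind2 => // i; apply: Ki.
move=> [x [r h]].
rewrite -choi_lin_comb in r.
apply: le_trans (Rep_Unorm r) _; rewrite -EFinD lee_fin.
apply: le_trans h _.
rewrite (eq_bigr (fun i => p i * v i + p i * e)); last by move=> i _; rewrite mulrDr.
by rewrite big_split /= -mulr_suml hp1 mul1r.
Qed.
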